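(* Let $k\ge 1$ be an integer and let $GP(3k,k)$ be the generalised Petersen graph. If $k$ is odd, the number of $1$-factorisations of $GP(3k,k)$ equals the Jacobsthal number $J(k)$; if $k$ is even, the number of $1$-factorisations of $GP(3k,k)$ equals $4J(k)$.
   Context: For integers $n,k$ with $1\le k<n/2$, the generalised Petersen graph $GP(n,k)$ has vertex set $\{u_i,v_i : i\in\mathbb{Z}_n\}$ and edge set $\{u_iu_{i+1},\ u_iv_i,\ v_iv_{i+k} : i\in\mathbb{Z}_n\}$ (indices modulo $n$). A $1$-factorisation of a graph is a partition of its edge set into perfect matchings (unordered). The Jacobsthal numbers are defined by $J(0)=0$, $J(1)=1$ and $J(k)=J(k-1)+2J(k-2)$ for $k\ge 2$. *)

(* Defs.v *)
From mathcomp Require Import all_boot.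
Unset Printing Implicit Defensive.

(* Vertices of GP(n,k): (false, i) = u_i, (true, i) = v_i, i in Z_n = 'I_n. *)
Definition gp_vertex (n : nat) : finType := (bool * 'I_n)%type.

Definition gp_adj (n k : nat) : rel (gp_vertex n) :=
  fun x y =>
    match x, y with
    | (false, i), (false, j) => (val j == (val i + 1) %% n) || (val i == (val j + 1) %% n)
    | (false, i), (true, j) | (true, j), (false, i) => val i == val j
    | (true, i), (true, j) => (val j == (val i + k) %% n) || (val i == (val j + k) %% n)
    end.

Definition gp_edges (n k : nat) : {set {set gp_vertex n}} :=
  [set e : {set gp_vertex n} |
     [exists x : gp_vertex n, exists y : gp_vertex n, gp_adj n k x y && (e == [set x; y])]].

Definition perfect_matching (n k : nat) (M : {set {set gp_vertex n}}) : bool :=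
  (M \subset gp_edges n k) &&
  [forall x : gp_vertex n, #|[set e in M | x \in e]| == 1].

Definition one_factorisation (n k : nat) (F : {set {set {set gp_vertex n}}}) : bool :=
  partition F (gp_edges n k) && [forall M in F, perfect_matching n k M].

Definition one_factorisations (n k : nat) : {set {set {set {set gp_vertex n}}}} :=
  [set F | one_factorisation n k F].

Fixpoint jacobsthal (k : nat) : nat :=
  match k with
  | 0 => 0
  | 1 => 1
  | (k'.+1 as k1).+1 => jacobsthal k1 + 2 * jacobsthal k'
  end.

(* Main.v *)
Require Import Defs.
From mathcomp Require Import all_boot zify.
Set Implicit Arguments. Unset Strict Implicit. Unset Printing Implicit Defensive.

Lemma ord_pos n (i : 'I_n) : 0 < n.
Proof. by apply: leq_ltn_trans (ltn_ord i). Qed.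

Definition sh n (i : 'I_n) (a : nat) : 'I_n := Ordinal (ltn_pmod (i + a) (ord_pos i)).

Lemma modE n a i : i < n -> a <= n -> (i + a) %% n = if i + a < n then i + a else i + a - n.
Proof.
move=> hi ha; case: ifP => h; first by rewrite modn_small.
have e : i + a = (i + a - n) + n by rewrite subnK // leqNgt h.
rewrite {1}e modnDr modn_small //; lia.
Qed.

Lemma modO n (i : 'I_n) a : a <= n -> (i + a) %% n = if i + a < n then i + a else i + a - n.
Proof. move=> ha; exact: modE. Qed.

Lemma val_sh n (i : 'I_n) a : a <= n -> val (sh i a) = if i + a < n then i + a else i + a - n.
Proof. move=> ha; exact: modE. Qed.

Arguments sh : simpl never.

Definition o0 : 'I_3 := @Ordinal 3 0 isT.
Definition o1 : 'I_3 := @Ordinal 3 1 isT.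
Definition o2 : 'I_3 := @Ordinal 3 2 isT.

Ltac splitif := repeat (case: ifP => ?).

Lemma oeq (m : nat) (a b : 'I_m) : (a == b) = (nat_of_ord a == nat_of_ord b).
Proof. by []. Qed.

Definition third (a b : 'I_3) : 'I_3 :=
  match 3 - a - b with 0 => o0 | 1 => o1 | _ => o2 end.

Lemma third_val (a b : 'I_3) : a != b -> val (third a b) = 3 - a - b.
Proof.
by case: a b => [[|[|[|a]]] ha] [[|[|[|b]]] hb].
Qed.

Lemma third_sym a b : third a b = third b a.
Proof. by rewrite /third; have -> : 3 - a - b = 3 - b - a by lia. Qed.

Lemma third_spec a b d : uniq [:: a; b; d] -> third a b = d.
Proof.
have:= ltn_ord a; have := ltn_ord b; have := ltn_ord d.
rewrite /= !inE !oeq /= => ha hb hd h; apply: val_inj; rewrite third_val /=; first lia.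
by rewrite oeq; lia.
Qed.

Lemma third_uniq a b : a != b -> uniq [:: a; b; third a b].
Proof.
move=> h; have:= ltn_ord a; have := ltn_ord b; have := third_val h; move: h.
rewrite /= !inE !oeq /=; lia.
Qed.

Definition S3 := ('I_3 * 'I_3 * 'I_3)%type.

Definition R3 (x y : S3) : bool :=
  [&& x.1.1 != y.1.1, x.1.2 != y.1.2, x.2 != y.2 &
      uniq [:: third x.1.1 y.1.1; third x.1.2 y.1.2; third x.2 y.2]].
Definition rot3 (x : S3) : S3 := (x.1.2, x.2, x.1.1).

Lemma R3_rot x y : R3 (rot3 x) (rot3 y) = R3 x y.
Proof. by rewrite /R3 /= !inE !oeq /=; lia. Qed.

Lemma bij_card (T U : finType) (A : {set T}) (B : {set U}) (f : T -> U) (g : U -> T) :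
  (forall a, a \in A -> f a \in B) -> (forall b, b \in B -> g b \in A) ->
  (forall a, a \in A -> g (f a) = a) -> (forall b, b \in B -> f (g b) = b) -> #|A| = #|B|.
Proof.
move=> fAB gBA gf fg; apply/eqP; rewrite eqn_leq; apply/andP; split.
- rewrite -(@card_in_imset _ _ f A); last by move=> x y hx hy e; rewrite -(gf x hx) e gf.
  by apply: subset_leq_card; apply/subsetP => y /imsetP [x hx ->]; apply: fAB.
- rewrite -(@card_in_imset _ _ g B); last by move=> x y hx hy e; rewrite -(fg x hx) e fg.
  by apply: subset_leq_card; apply/subsetP => y /imsetP [x hx ->]; apply: gBA.
Qed.

Lemma third_uniq' a b : a != b -> uniq [:: b; a; third a b].
Proof.
move=> h; have:= ltn_ord a; have := ltn_ord b; have := third_val h; move: h.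
rewrite /= !inE !oeq /=; lia.
Qed.

Section Graph.
Variable k : nat.
Hypothesis hk : 0 < k.
Local Notation n := (3 * k).
Local Notation V := (gp_vertex n).
Local Notation ET := ('I_3 * 'I_n)%type.

Definition edge (p : ET) : {set V} :=
  let i := p.2 in
  if val p.1 == 0 then [set ((false, i) : V); (false, sh i 1)]
  else if val p.1 == 1 then [set ((false, i) : V); (true, i)]
  else [set ((true, i) : V); (true, sh i k)].

Definition inc (x : V) : seq ET :=
  let i := x.2 in
  if x.1 then [:: (o1, i); (o2, i); (o2, sh i (2 * k))]
  else [:: (o0, i); (o0, sh i (n - 1)); (o1, i)].

Lemma in_edge x p : (x \in edge p) = (p \in inc x).
Proof.
case: x => b i; case: p => [[[|[|[|t]]] ht] j] //=;
 have hi := ltn_ord i; have hj := ltn_ord j;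
 rewrite /edge /inc /= !inE; case: b => /=; rewrite !in_cons in_nil ?xpair_eqE /=;
 rewrite -?val_eqE /= ?val_sh ?modO; try lia; splitif; rewrite ?modE; try lia; splitif; lia.
Qed.

Lemma inc_uniq x : uniq (inc x).
Proof.
case: x => [[|] i]; have hi := ltn_ord i;
rewrite /inc /= !in_cons in_nil !xpair_eqE -?val_eqE /= ?modO; try lia; splitif; lia.
Qed.

Lemma edge_inj : injective edge.
Proof.
move=> [t i] [s j] E; have hi := ltn_ord i; have hj := ltn_ord j; have hs := ltn_ord s.
have hm : forall x, x \in edge (t,i) -> (s,j) \in inc x by move=> x; rewrite E in_edge.
apply/eqP; rewrite xpair_eqE -!val_eqE /=.
case: t E hm => [[|[|[|t]]] ht] //= E hm.
- move: (hm (false, i)) (hm (false, sh i 1)); rewrite /edge /= !inE !eqxx ?orbT => /(_ isT) h1 /(_ isT) h2.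
  move: h1 h2; rewrite !xpair_eqE -?val_eqE /= ?val_sh ?modO; try lia; splitif; rewrite ?modE; try lia; splitif; lia.
- move: (hm (false, i)) (hm (true, i)); rewrite /edge /= !inE !eqxx ?orbT => /(_ isT) h1 /(_ isT) h2.
  move: h1 h2; rewrite !xpair_eqE -?val_eqE /= ?val_sh ?modO; try lia; splitif; rewrite ?modE; try lia; splitif; lia.
- move: (hm (true, i)) (hm (true, sh i k)); rewrite /edge /= !inE !eqxx ?orbT => /(_ isT) h1 /(_ isT) h2.
  move: h1 h2; rewrite !xpair_eqE -?val_eqE /= ?val_sh ?modO; try lia; splitif; rewrite ?modE; try lia; splitif; lia.
Qed.

Ltac arith := rewrite ?inE ?in_cons ?in_nil ?xpair_eqE -?val_eqE /= ?val_sh ?modO;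
  try lia; splitif; rewrite ?modE; try lia; splitif; lia.

Lemma edge_card p : #|edge p| = 2.
Proof.
case: p => [[[|[|[|t]]] ht] i] //=; have hi := ltn_ord i; rewrite /edge /= cards2; arith.
Qed.

Lemma edge_set2 x y p : x \in edge p -> y \in edge p -> x != y -> edge p = [set x; y].
Proof.
move=> hx hy hxy; apply/eqP; rewrite eq_sym eqEcard edge_card cards2 hxy andbT.
by apply/subsetP => z; rewrite !inE => /orP[]/eqP->.
Qed.

Lemma gp_edgesE : gp_edges n k = [set edge p | p : ET].
Proof.
apply/setP=> E; rewrite inE; apply/existsP/imsetP.
- case=> x /existsP [y /andP [hxy /eqP ->]].
  have [p hpx hpy] : exists2 p, p \in inc x & p \in inc y.
    case: x y hxy => [[|] i] [[|] j] /=; have hi := ltn_ord i; have hj := ltn_ord j.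
    + case/orP=> h; [exists (o2, i) | exists (o2, j)]; rewrite /inc /=; move: h; arith.
    + move=> h; exists (o1, j); rewrite /inc /=; move: h; arith.
    + move=> h; exists (o1, i); rewrite /inc /=; move: h; arith.
    + case/orP=> h; [exists (o0, i) | exists (o0, j)]; rewrite /inc /=; move: h; arith.
  have nxy : x != y.
    case: x y hxy {hpx hpy} => [[|] i] [[|] j] //=; have hi := ltn_ord i; have hj := ltn_ord j; arith.
  by exists p => //; rewrite (@edge_set2 x y p) // ?in_edge.
- case=> p _ ->; case: p => [[[|[|[|t]]] ht] i] //=; have hi := ltn_ord i.
  + exists (false, i); apply/existsP; exists (false, sh i 1); rewrite /edge /= ?eqxx ?andbT; arith.
  + exists (false, i); apply/existsP; exists (true, i); rewrite /edge /= ?eqxx ?andbT; arith.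
  + exists (true, i); apply/existsP; exists (true, sh i k); rewrite /edge /= ?eqxx ?andbT; arith.
Qed.


Lemma n_gt0 : 0 < n. Proof. by rewrite muln_gt0. Qed.
Definition z0 : 'I_n := Ordinal n_gt0.
Definition pO0 : ET := (o0, z0).
Definition pS0 : ET := (o1, z0).
Definition pOl : ET := (o0, sh z0 (n - 1)).

Definition proper (c : {ffun ET -> 'I_3}) := [forall x : V, uniq [seq c p | p <- inc x]].
Definition normal (c : {ffun ET -> 'I_3}) := [&& c pO0 == o0, c pS0 == o1 & c pOl == o2].

Definition Mc (c : {ffun ET -> 'I_3}) (col : 'I_3) : {set {set V}} := edge @: [set p | c p == col].
Definition Fof (c : {ffun ET -> 'I_3}) : {set {set {set V}}} := [set Mc c col | col : 'I_3].

Lemma three_count (a b d col : 'I_3) : uniq [:: a; b; d] ->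
  count (pred1 col) [:: a; b; d] = 1.
Proof.
have := ltn_ord a; have := ltn_ord b; have := ltn_ord d; have := ltn_ord col.
rewrite /= !inE -!val_eqE /=; lia.
Qed.

Lemma count_col (c : {ffun ET -> 'I_3}) col x : proper c -> count (fun p => c p == col) (inc x) = 1.
Proof.
move=> /forallP /(_ x); case: x => [[|] i]; rewrite /inc /= => h; move: (three_count col h) => /=; by [].
Qed.

Lemma card_filter_uniq (T : finType) (s : seq T) (P : pred T) : uniq s ->
  #|[set x | P x && (x \in s)]| = count P s.
Proof.
move=> us; rewrite -size_filter.
have /card_uniqP <- : uniq (filter P s) by rewrite filter_uniq.
by apply: eq_card => x; rewrite inE mem_filter.
Qed.

Lemma M_meet c col x : proper c -> #|[set e in Mc c col | x \in e]| = 1.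
Proof.
move=> hc.
have -> : [set e in Mc c col | x \in e] = edge @: [set p | (c p == col) && (p \in inc x)].
  apply/setP => e; rewrite inE; apply/andP/imsetP.
  - case=> /imsetP [p]; rewrite inE => hp -> hx; by exists p => //; rewrite inE hp -in_edge.
  - case=> p; rewrite inE => /andP [hp hx] ->; split; last by rewrite in_edge.
    by apply/imsetP; exists p => //; rewrite inE.
rewrite card_imset; last exact: edge_inj.
by rewrite card_filter_uniq ?inc_uniq // count_col.
Qed.

Lemma col_exists c a : normal c -> exists p, c p == a.
Proof.
move=> /and3P [h0 h1 h2]; case: a => [[|[|[|a]]] ha] //;
 [exists pO0; move: h0 | exists pS0; move: h1 | exists pOl; move: h2]; by rewrite -!val_eqE.
Qed.

Lemma Mc_inj c a b : normal c -> Mc c a = Mc c b -> a = b.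
Proof.
move=> hn e; have [p /eqP hp] := col_exists a hn.
have : edge p \in Mc c b by rewrite -e; apply/imsetP; exists p; rewrite ?inE ?hp.
by case/imsetP => q; rewrite inE => /eqP hq /edge_inj epq; rewrite -hp -hq epq.
Qed.

Lemma coverF c : cover (Fof c) = [set edge p | p : ET].
Proof.
apply/setP => E; apply/bigcupP/imsetP.
- by case=> B /imsetP [col _ ->] /imsetP [p _ ->]; exists p.
- case=> p _ ->; exists (Mc c (c p)); first by apply/imsetP; exists (c p).
  by apply/imsetP; exists p; rewrite ?inE.
Qed.

Lemma trivF c : trivIset (Fof c).
Proof.
apply/trivIsetP => A B /imsetP [a _ ->] /imsetP [b _ ->] neq.
rewrite -setI_eq0; apply/eqP/setP => E; rewrite !inE; apply/negP => /andP [].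
case/imsetP => p; rewrite inE => /eqP hp ->; case/imsetP => q; rewrite inE => /eqP hq /edge_inj epq.
by move: neq; rewrite -hp -hq epq eqxx.
Qed.

Lemma L1 c : proper c -> normal c -> one_factorisation n k (Fof c).
Proof.
move=> hc hn; apply/andP; split.
- apply/and3P; split; first by rewrite coverF gp_edgesE.
  + exact: trivF.
  + apply/negP => /imsetP [a _ e0]; have [p /eqP hp] := col_exists a hn.
    have : edge p \in Mc c a by apply/imsetP; exists p; rewrite ?inE ?hp.
    by rewrite -e0 inE.
- apply/forallP => M; apply/implyP => /imsetP [a _ ->]; apply/andP; split.
  + by rewrite gp_edgesE; apply/subsetP => E /imsetP [p _ ->]; apply/imsetP; exists p.
  + by apply/forallP => x; rewrite M_meet.
Qed.


Section Fac.
Variable F : {set {set {set V}}}.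
Hypothesis hF : one_factorisation n k F.

Let hcov : cover F = [set edge p | p : ET].
Proof. by case/andP: hF => /and3P [/eqP -> _ _] _; rewrite gp_edgesE. Qed.
Let htriv : trivIset F.
Proof. by case/andP: hF => /and3P []. Qed.
Let hPM B : B \in F -> perfect_matching n k B.
Proof. by case/andP: hF => _ /forallP /(_ B) /implyP. Qed.

Let g p := pblock F (edge p).

Lemma in_cov p : edge p \in cover F.
Proof. by rewrite hcov; apply/imsetP; exists p. Qed.

Lemma g_mem p : g p \in F.
Proof. exact: pblock_mem (in_cov p). Qed.

Lemma g_in p : edge p \in g p.
Proof. by rewrite /g mem_pblock in_cov. Qed.

Lemma K1 x p q : p \in inc x -> q \in inc x -> p != q -> g p != g q.
Proof.
move=> hp hq npq; apply/negP => /eqP e.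
have /andP [_ /forallP /(_ x) /eqP h1] := hPM (g_mem p).
have : [set edge p; edge q] \subset [set e in g p | x \in e].
  apply/subsetP => E; rewrite !inE => /orP [] /eqP ->; rewrite ?in_edge ?hp ?hq ?g_in //.
  by rewrite e g_in.
move/subset_leq_card; rewrite h1 cards2.
by case: eqP => // /edge_inj epq; move: npq; rewrite epq eqxx.
Qed.

Lemma K2 B : B \in F -> exists2 p, p \in inc (false, z0) & B = g p.
Proof.
move=> hB; have /andP [hsub /forallP /(_ (false, z0)) /eqP h1] := hPM hB.
have [E] : exists E, E \in [set e in B | (false, z0) \in e].
  by apply/card_gt0P; rewrite h1.
rewrite inE => /andP [hEB hx].
have : E \in cover F by apply: (subsetP (bigcup_sup _ hB)).
rewrite hcov => /imsetP [p _ eE]; exists p; first by rewrite -in_edge -eE.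
by rewrite /g (def_pblock htriv hB) // -eE.
Qed.

Lemma P_distinct : [/\ g pO0 != g pS0, g pO0 != g pOl & g pS0 != g pOl].
Proof.
have h : forall p q, p \in inc (false, z0) -> q \in inc (false, z0) -> p != q -> g p != g q.
  by move=> p q; apply: K1.
have hz := n_gt0.
split; apply: h; rewrite ?inE ?eqxx ?orbT //; rewrite /pO0 /pS0 /pOl ?xpair_eqE -?val_eqE /= ?val_sh; try lia.
all: rewrite /inc /= !inE; rewrite ?eqxx ?orbT //.
Qed.

Definition colB (B : {set {set V}}) : 'I_3 :=
  if B == g pO0 then o0 else if B == g pS0 then o1 else o2.

Lemma colB_inj : {in F &, injective colB}.
Proof.
move=> B1 B2 /K2 [p1 hp1 ->] /K2 [p2 hp2 ->].
have [d1 d2 d3] := P_distinct.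
move: hp1 hp2; rewrite /inc /= !inE => /or3P [] /eqP -> /or3P [] /eqP -> //;
rewrite /colB ?eqxx -/pO0 -/pS0 -/pOl; rewrite 1?eq_sym ?(negbTE d1) ?(negbTE d2) ?(negbTE d3) ?eqxx //;
rewrite 1?eq_sym ?(negbTE d1) ?(negbTE d2) ?(negbTE d3) ?eqxx //.
all: rewrite ?[g pS0 == g pO0]eq_sym ?[g pOl == g pS0]eq_sym ?[g pOl == g pO0]eq_sym ?(negbTE d1) ?(negbTE d2) ?(negbTE d3) //.
Qed.


Definition cof : {ffun ET -> 'I_3} := [ffun p => colB (g p)].

Lemma cof_normal : normal cof.
Proof.
have [d1 d2 d3] := P_distinct.
rewrite /normal !ffunE /colB !eqxx /= [g pS0 == _]eq_sym (negbTE d1) eqxx /=.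
by rewrite [g pOl == _]eq_sym (negbTE d2) [g pOl == _]eq_sym (negbTE d3).
Qed.

Lemma cof_proper : proper cof.
Proof.
apply/forallP => x.
have -> : [seq cof p | p <- inc x] = [seq colB B | B <- [seq g p | p <- inc x]].
  by rewrite -map_comp; apply: eq_map => p; rewrite ffunE.
rewrite map_inj_in_uniq; last first.
  by move=> B1 B2 /mapP [p _ ->] /mapP [q _ ->]; apply: colB_inj; apply: g_mem.
rewrite map_inj_in_uniq ?inc_uniq //.
by move=> p q hp hq e; case: (eqVneq p q) => // /(K1 hp hq); rewrite e eqxx.
Qed.

Lemma cofK : Fof cof = F.
Proof.
have hM : forall B, B \in F -> Mc cof (colB B) = B.
  move=> B hB; apply/setP => E; apply/imsetP/idP.
  - case=> p; rewrite inE ffunE => /eqP e ->.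
    by rewrite -(colB_inj (g_mem p) hB e); apply: g_in.
  - move=> hE; have : E \in cover F by apply: (subsetP (bigcup_sup _ hB)).
    rewrite hcov => /imsetP [p _ eE]; exists p => //; rewrite inE ffunE.
    by rewrite /g (def_pblock htriv hB) // -eE.
apply/setP => B; apply/imsetP/idP.
- case=> col _ ->; have [p /eqP hp] := col_exists col cof_normal.
  by rewrite -hp ffunE hM ?g_mem //; apply: g_mem.
- by move=> hB; exists (colB B) => //; rewrite hM.
Qed.

End Fac.


Lemma cof_Fof c : proper c -> normal c -> cof (Fof c) = c.
Proof.
move=> hc hn.
have hg : forall p, pblock (Fof c) (edge p) = Mc c (c p).
  move=> p; apply: def_pblock; first exact: trivF.
  - by apply/imsetP; exists (c p).
  - by apply/imsetP; exists p; rewrite ?inE.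
have e : forall a b, (Mc c a == Mc c b) = (a == b).
  by move=> a b; apply/eqP/eqP => [/(Mc_inj hn)|->].
apply/ffunP => p; rewrite ffunE /colB !hg !e.
move/and3P: hn => [/eqP -> /eqP -> _].
by case: (c p) => [[|[|[|m]]] hm] //=; apply/val_inj.
Qed.

Lemma card_OF : #|one_factorisations n k| = #|[set c | proper c && normal c]|.
Proof.
have -> : one_factorisations n k = Fof @: [set c | proper c && normal c].
  apply/setP => F; rewrite inE; apply/idP/imsetP.
  - move=> hF; exists (cof F); first by rewrite inE cof_proper // cof_normal.
    by rewrite cofK.
  - by case=> c; rewrite inE => /andP [hc hn] ->; apply: L1.
apply: card_in_imset => c1 c2; rewrite !inE => /andP [h1 h1'] /andP [h2 h2'] e.
by rewrite -(cof_Fof h1 h1') e cof_Fof.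
Qed.


Definition ordn (m : nat) : 'I_n := Ordinal (ltn_pmod m n_gt0).

Lemma sh_ordn (x : 'I_n) a : sh x a = ordn (x + a).
Proof. by apply: val_inj. Qed.
Lemma ordnD a b : ordn (ordn a + b) = ordn (a + b).
Proof. by apply: val_inj; rewrite /= modnDml. Qed.
Lemma ordn_mod a : ordn (a %% n) = ordn a.
Proof. by apply: val_inj; rewrite /= modn_mod. Qed.
Lemma ordn_val (x : 'I_n) : ordn x = x.
Proof. by apply: val_inj; rewrite /= modn_small. Qed.
Lemma ordn_eq a b q : a = b + q * n -> ordn a = ordn b.
Proof. by move=> ->; apply: val_inj; rewrite /= addnC modnMDl. Qed.

Definition C (c : {ffun ET -> 'I_3}) (t : 'I_3) (x : nat) := c (t, ordn x).

Lemma C_eq c t a b q : a = b + q * n -> C c t a = C c t b.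
Proof. by move=> h; rewrite /C (ordn_eq h). Qed.

Ltac Ceq := first [ apply: (@C_eq _ _ _ _ 0); lia | apply: (@C_eq _ _ _ _ 1); lia
  | apply: (@C_eq _ _ _ _ 2); lia | symmetry; apply: (@C_eq _ _ _ _ 1); lia
  | symmetry; apply: (@C_eq _ _ _ _ 2); lia ].

Lemma properU c x : proper c -> uniq [:: C c o0 x; C c o0 (x + (n-1)); C c o1 x].
Proof. by move=> /forallP /(_ (false, ordn x)); rewrite /inc /= sh_ordn ordnD. Qed.

Lemma properV c x : proper c -> uniq [:: C c o1 x; C c o2 x; C c o2 (x + 2 * k)].
Proof. by move=> /forallP /(_ (true, ordn x)); rewrite /inc /= sh_ordn ordnD. Qed.

Lemma tri c y : proper c -> C c o1 (y + 2 * k) = C c o2 y.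
Proof.
move=> hc; have P1 := properV y hc; have P2 := properV (y + k) hc; have P3 := properV (y + 2 * k) hc.
have e2 : C c o2 (y + k + 2 * k) = C c o2 y by Ceq.
have e3 : C c o2 (y + 2 * k + 2 * k) = C c o2 (y + k) by Ceq.
rewrite e2 in P2; rewrite e3 in P3.
have := ltn_ord (C c o2 y); have := ltn_ord (C c o2 (y + k)); have := ltn_ord (C c o2 (y + 2 * k)).
have := ltn_ord (C c o1 (y + 2 * k)).
move: P1 P2 P3; rewrite /= !inE !oeq /= => P1 P2 P3 *; apply/eqP; rewrite oeq; lia.
Qed.

Lemma thirdU c x : proper c -> third (C c o0 x) (C c o0 x.+1) = C c o1 x.+1.
Proof.
move=> hc; have := properU x.+1 hc; have -> : C c o0 (x.+1 + (n-1)) = C c o0 x by Ceq.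
by move=> h; rewrite third_sym; apply: third_spec.
Qed.

Lemma neqU c x : proper c -> C c o0 x != C c o0 x.+1.
Proof.
move=> hc; have := properU x.+1 hc; have -> : C c o0 (x.+1 + (n-1)) = C c o0 x by Ceq.
by rewrite /= !inE negb_or eq_sym => /andP [/andP [] ].
Qed.

Lemma triU c y : proper c -> uniq [:: C c o1 y; C c o1 (y + k); C c o1 (y + 2 * k)].
Proof.
move=> hc; rewrite (tri y hc).
have -> : C c o1 y = C c o1 (y + k + 2 * k) by Ceq.
have -> : C c o1 (y + k) = C c o1 (y + 2 * k + 2 * k) by Ceq.
rewrite !tri //.
have P1 := properV y hc; have P2 := properV (y + k) hc; have P3 := properV (y + 2 * k) hc.
have e2 : C c o2 (y + k + 2 * k) = C c o2 y by Ceq.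
have e3 : C c o2 (y + 2 * k + 2 * k) = C c o2 (y + k) by Ceq.
rewrite e2 in P2; rewrite e3 in P3.
move: P1 P2 P3; rewrite /= !inE !oeq /=; lia.
Qed.


Lemma thirdU2 c x : proper c -> third (C c o0 (x + (n-1))) (C c o0 x) = C c o1 x.
Proof. by move=> hc; rewrite third_sym; apply: third_spec; apply: properU. Qed.

Definition Phi1 (c : {ffun ET -> 'I_3}) : {ffun 'I_n -> 'I_3} := [ffun m => c (o0, m)].
Definition E (e : {ffun 'I_n -> 'I_3}) (x : nat) := e (ordn x).

Lemma E_eq e a b q : a = b + q * n -> E e a = E e b.
Proof. by move=> h; rewrite /E (ordn_eq h). Qed.

Ltac Eeq := first [ apply: (@E_eq _ _ _ 0); lia | apply: (@E_eq _ _ _ 1); lia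
  | apply: (@E_eq _ _ _ 2); lia | symmetry; apply: (@E_eq _ _ _ 1); lia
  | symmetry; apply: (@E_eq _ _ _ 2); lia ].

Lemma E_modD e a b : E e (a %% n + b) = E e (a + b).
Proof. by rewrite /E; congr (e _); exact: (ordnD a b). Qed.
Lemma E_mod e a : E e (a %% n) = E e a.
Proof. by rewrite /E ordn_mod. Qed.
Lemma E_modS e a : E e (a %% n).+1 = E e a.+1.
Proof. by rewrite -[(a %% n).+1]addn1 E_modD addn1. Qed.
Lemma E_modDS e a b : E e (a %% n + b).+1 = E e (a + b).+1.
Proof. by rewrite -[(a %% n + b).+1]addn1 -addnA E_modD addnA addn1. Qed.
Lemma E_ord e (x : 'I_n) : E e x = e x.
Proof. by rewrite /E ordn_val. Qed.
Lemma EPhi c x : E (Phi1 c) x = C c o0 x.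
Proof. by rewrite /E ffunE. Qed.

Definition sE e x := third (E e (x + (n-1))) (E e x).
Lemma sE_modD e a b : sE e (a %% n + b) = sE e (a + b).
Proof. by rewrite /sE -addnA !E_modD addnA. Qed.
Lemma sE_eq e a b q : a = b + q * n -> sE e a = sE e b.
Proof. by move=> h; rewrite /sE (@E_eq e a b q h); congr third; apply: (@E_eq _ _ _ q); lia. Qed.

Definition Psi1 (e : {ffun 'I_n -> 'I_3}) : {ffun ET -> 'I_3} :=
  [ffun p : ET => if val p.1 == 0 then E e p.2 else if val p.1 == 1 then sE e p.2 else sE e (p.2 + 2 * k)].

Definition TE e (m : nat) : S3 := (E e m, E e (m + k), E e (m + 2 * k)).
Definition evalid e := [forall m : 'I_n, R3 (TE e m) (TE e m.+1)].
Definition enorm (e : {ffun 'I_n -> 'I_3}) := (e z0 == o0) && (e (sh z0 (n-1)) == o2).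

Lemma Psi1K c : proper c -> Psi1 (Phi1 c) = c.
Proof.
move=> hc; apply/ffunP => [[t m]]; rewrite ffunE /=.
case: t => [[|[|[|t]]] ht] //=.
- by rewrite EPhi /C ordn_val; congr (c (_, _)); apply: val_inj.
- by rewrite /sE !EPhi thirdU2 // /C ordn_val; congr (c (_, _)); apply: val_inj.
- by rewrite /sE !EPhi thirdU2 // tri // /C ordn_val; congr (c (_, _)); apply: val_inj.
Qed.

Lemma Phi1_valid c : proper c -> evalid (Phi1 c).
Proof.
move=> hc; apply/forallP => m; rewrite /R3 /TE /= !EPhi !addSn !neqU // !thirdU //=.
exact: (triU m.+1 hc).
Qed.

Lemma Phi1_norm c : normal c -> enorm (Phi1 c).
Proof. by rewrite /enorm !ffunE; case/and3P => -> _ ->. Qed.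

Lemma PhiPsi e : Phi1 (Psi1 e) = e.
Proof. by apply/ffunP => m; rewrite !ffunE /= E_ord. Qed.

Lemma Psi1_proper e : evalid e -> proper (Psi1 e).
Proof.
move=> hv; apply/forallP => [[b m]].
have h := forallP hv (ordn (m + (n-1))).
rewrite /R3 /TE /= ?addSn ?E_modS ?E_modDS ?E_modD ?E_mod in h.
have e1 : E e (m + (n - 1)).+1 = E e m by Eeq.
have e2 : E e (m + (n - 1) + k).+1 = E e (m + k) by Eeq.
have e3 : E e (m + (n - 1) + 2 * k).+1 = E e (m + 2 * k) by Eeq.
have e4 : E e (m + (n - 1) + k) = E e (m + k + (n - 1)) by Eeq.
have e5 : E e (m + (n - 1) + 2 * k) = E e (m + 2 * k + (n - 1)) by Eeq.
rewrite e1 e2 e3 e4 e5 -/(sE e m) -/(sE e (m + k)) -/(sE e (m + 2 * k)) in h.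
have h1 : E e (m + (n-1)) != E e m by move: h; case/andP.
case: b => /=; rewrite /inc /= !ffunE /=.
- rewrite sE_modD (@sE_eq e (m + 2 * k + 2 * k) (m + k) 1); last by lia.
  move: h; rewrite /= !inE !oeq /=; lia.
- by rewrite E_mod; have := third_uniq' h1.
Qed.

Lemma Psi1_norm e : enorm e -> normal (Psi1 e).
Proof.
case/andP => /eqP h0 /eqP h2.
have h0' : E e 0 = o0 by rewrite -h0 /E; congr (e _); apply: val_inj; rewrite /= mod0n.
have h2' : E e (n - 1) = o2 by rewrite -h2 /E; congr (e _); apply: val_inj.
rewrite /normal /pO0 /pS0 /pOl !ffunE /= /sE /= h0' h2' !eqxx /=.
by rewrite E_mod h2'.
Qed.

Lemma card_CE : #|[set c | proper c && normal c]| = #|[set e | evalid e && enorm e]|.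
Proof.
apply: (@bij_card _ _ _ _ Phi1 Psi1).
- by move=> c; rewrite !inE => /andP [hc hn]; rewrite Phi1_valid ?Phi1_norm.
- by move=> e; rewrite !inE => /andP [hv hn]; rewrite Psi1_proper ?Psi1_norm.
- by move=> c; rewrite inE => /andP [hc _]; apply: Psi1K.
- by move=> e _; apply: PhiPsi.
Qed.


Definition ordk (m : nat) : 'I_k := Ordinal (ltn_pmod m hk).
Definition Phi2 (e : {ffun 'I_n -> 'I_3}) : {ffun 'I_k -> S3} := [ffun i : 'I_k => TE e i].
Definition comp (f : {ffun 'I_k -> S3}) (m : nat) : 'I_3 :=
  if m < k then (f (ordk m)).1.1 else if m < 2 * k then (f (ordk (m - k))).1.2
  else (f (ordk (m - 2 * k))).2.
Definition Psi2 (f : {ffun 'I_k -> S3}) : {ffun 'I_n -> 'I_3} := [ffun m : 'I_n => comp f m].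

Definition nextf (f : {ffun 'I_k -> S3}) (i : 'I_k) : S3 :=
  if i.+1 < k then f (ordk i.+1) else rot3 (f (ordk 0)).
Definition fvalid (f : {ffun 'I_k -> S3}) := [forall i : 'I_k, R3 (f i) (nextf f i)].
Definition fnorm (f : {ffun 'I_k -> S3}) := ((f (ordk 0)).1.1 == o0) && ((f (ordk (k - 1))).2 == o2).

Lemma Psi2K e : Psi2 (Phi2 e) = e.
Proof.
apply/ffunP => m; have hm := ltn_ord m; rewrite !ffunE /comp.
case: ifP => h1; [|case: ifP => h2]; rewrite ffunE /TE /= modn_small; try lia;
  rewrite -E_ord; Eeq.
Qed.

Lemma Phi2K f : Phi2 (Psi2 f) = f.
Proof.
apply/ffunP => i; have hi := ltn_ord i; rewrite ffunE /TE /E !ffunE /comp /= !modn_small; try lia.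
have -> : ordk i = i by apply: val_inj; rewrite /= modn_small.
rewrite hi; case: ifP; first lia; move=> _; case: ifP; last lia; move=> _.
case: ifP; first lia; move=> _; case: ifP; first lia; move=> _.
have -> : ordk (i + k - k) = i by apply: val_inj; rewrite /= addnK modn_small.
have -> : ordk (i + 2 * k - 2 * k) = i by apply: val_inj; rewrite /= addnK modn_small.
by case: (f i) => [[]].
Qed.

Lemma TE_rot e m : TE e (m + k) = rot3 (TE e m).
Proof. by rewrite /TE /rot3 /=; congr (_, _, _); Eeq. Qed.

Lemma nextfE e (i : 'I_k) : nextf (Phi2 e) i = TE e i.+1.
Proof.
have hi := ltn_ord i; rewrite /nextf; case: ifP => h.
- by rewrite ffunE /= modn_small.
- rewrite ffunE /= mod0n /TE /rot3 /=; congr (_, _, _); Eeq.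
Qed.

Lemma validE e : evalid e = fvalid (Phi2 e).
Proof.
apply/forallP/forallP => h i.
- have := h (ordn i); have hi := ltn_ord i.
  by rewrite nextfE ffunE /= modn_small //; lia.
- have hi := ltn_ord i.
  have H : forall m, m < k -> R3 (TE e m) (TE e m.+1).
    by move=> m hm; have := h (ordk m); rewrite nextfE ffunE /= modn_small.
  case: (ltnP i k) => h1; first exact: H.
  case: (ltnP i (2 * k)) => h2.
  - have -> : nat_of_ord i = i - k + k by lia.
    by rewrite -addSn !TE_rot R3_rot; apply: H; lia.
  - have -> : nat_of_ord i = i - 2 * k + k + k by lia.
    by rewrite -!addSn !TE_rot !R3_rot; apply: H; lia.
Qed.

Lemma normE e : enorm e = fnorm (Phi2 e).
Proof.
rewrite /enorm /fnorm !ffunE /TE /= mod0n modn_small; last lia.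
rewrite -[e (sh z0 (n-1))]E_ord /= E_mod.
have -> : E e (k - 1 + 2 * k) = E e (0 + (n - 1)) by Eeq.
by rewrite -[e z0]E_ord.
Qed.

Lemma card_EF : #|[set e | evalid e && enorm e]| = #|[set f | fvalid f && fnorm f]|.
Proof.
apply: (@bij_card _ _ _ _ Phi2 Psi2).
- by move=> e; rewrite !inE -validE -normE.
- by move=> f; rewrite !inE validE normE Phi2K.
- by move=> e _; apply: Psi2K.
- by move=> f _; apply: Phi2K.
Qed.

End Graph.

Definition all3 : seq 'I_3 := [:: o0; o1; o2].
Definition allS : seq S3 := [seq (p, d) | p <- [seq (a, b) | a <- all3, b <- all3], d <- all3].

Lemma allS_uniq : uniq allS. Proof. by vm_compute. Qed.
Lemma allS_all z : z \in allS.
Proof. by case: z => [[[[|[|[|?]]] ?] [[|[|[|?]]] ?]] [[|[|[|?]]] ?]]. Qed.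

Lemma sumS (F : S3 -> nat) : \sum_(z : S3) F z = \sum_(z <- allS) F z.
Proof.
rewrite -big_enum /=; apply: perm_big; apply: uniq_perm; rewrite ?enum_uniq ?allS_uniq //.
by move=> z; rewrite mem_enum allS_all.
Qed.

Fixpoint Wb (m : nat) (x y : S3) : nat :=
  if m is m'.+1 then \sum_(z : S3) R3 x z * Wb m' z y else (x == y).

Lemma WbD a b x y : Wb (a + b) x y = \sum_(z : S3) Wb a x z * Wb b z y.
Proof.
elim: a x => [|a IH] x /=.
- rewrite (bigD1 x) //= eqxx mul1n big1 ?addn0 // => z /negbTE; rewrite eq_sym => -> //.
- under eq_bigr do rewrite IH big_distrr /=.
  rewrite exchange_big /=; apply: eq_bigr => z _; rewrite big_distrl /=.
  by apply: eq_bigr => w _; rewrite mulnA.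
Qed.

Definition sumL (F : S3 -> nat) := foldr (fun w acc => F w + acc) 0 allS.
Lemma sumLE F : \sum_(z : S3) F z = sumL F.
Proof. by rewrite sumS /sumL; elim: allS => [|a s IH]; rewrite ?big_nil ?big_cons //= IH. Qed.

Definition idx (z : S3) := index z allS.

Fixpoint col (m : nat) (y : S3) : seq nat :=
  if m is m'.+1 then
    let v := col m' y in [seq sumL (fun w => R3 z w * nth 0 v (idx w)) | z <- allS]
  else [seq nat_of_bool (z == y) | z <- allS].

Lemma col_spec m y z : nth 0 (col m y) (idx z) = Wb m z y.
Proof.
have hs : forall w, idx w < size allS by move=> w; rewrite index_mem allS_all.
elim: m z => [|m IH] z.
- have -> : col 0 y = [seq nat_of_bool (z == y) | z <- allS] by [].
  by rewrite (nth_map z) // nth_index ?allS_all.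
- have -> : col m.+1 y = [seq sumL (fun w => R3 z w * nth 0 (col m y) (idx w)) | z <- allS] by [].
  rewrite (nth_map z) // nth_index ?allS_all //.
  by rewrite -sumLE /=; apply: eq_bigr => w _; rewrite IH.
Qed.

Lemma Wid_comp : all (fun y => let c5 := col 5 y in let c1 := col 1 y in let c3 := col 3 y in
   all (fun z => nth 0 c5 (idx z) + 4 * nth 0 c1 (idx z) == 5 * nth 0 c3 (idx z)) allS) allS.
Proof. by vm_compute. Qed.

Lemma Wid x y : Wb 5 x y + 4 * Wb 1 x y = 5 * Wb 3 x y.
Proof.
have := Wid_comp; move/allP/(_ y (allS_all y)); cbv beta zeta.
move/allP/(_ x (allS_all x)); cbv beta zeta.
by move/eqP; rewrite !col_spec.
Qed.

Definition condN (x y : S3) : nat := [&& x.1.1 == o0, y.2 == o2 & R3 y (rot3 x)].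
Definition Nf m := \sum_(x : S3) \sum_(y : S3) condN x y * Wb m x y.

Definition Nfc m := sumL (fun y => let c := col m y in sumL (fun x => condN x y * nth 0 c (idx x))).

Lemma eq_sumL F G : (forall z, F z = G z) -> sumL F = sumL G.
Proof. by move=> h; rewrite /sumL; elim: allS => //= a s ->; rewrite h. Qed.

Lemma NfE m : Nf m = Nfc m.
Proof.
rewrite /Nf exchange_big sumLE /Nfc; apply: eq_sumL => y; cbv zeta.
by rewrite -sumLE; apply: eq_bigr => x _; rewrite col_spec.
Qed.

Lemma Nf_base : [seq Nfc m | m <- iota 0 5] = [:: 1; 4; 3; 20; 11].
Proof. by vm_compute. Qed.

Lemma Wrec m x y : Wb (5 + m) x y + 4 * Wb (1 + m) x y = 5 * Wb (3 + m) x y.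
Proof.
rewrite !WbD !big_distrr -big_split /=; apply: eq_bigr => z _.
by rewrite mulnA -mulnDl Wid mulnA.
Qed.

Lemma Nf_rec m : Nf (5 + m) + 4 * Nf (1 + m) = 5 * Nf (3 + m).
Proof.
rewrite /Nf !big_distrr -big_split /=; apply: eq_bigr => x _.
rewrite !big_distrr -big_split /=; apply: eq_bigr => y _.
by rewrite mulnCA -mulnDr Wrec mulnCA.
Qed.

Definition tgt k := if odd k then jacobsthal k else 4 * jacobsthal k.

Lemma jac_rec k : jacobsthal k.+4 + 4 * jacobsthal k = 5 * jacobsthal k.+2.
Proof.
have e : forall j, jacobsthal j.+2 = jacobsthal j.+1 + 2 * jacobsthal j by [].
rewrite !e; lia.
Qed.

Lemma Nf_val m : Nf m = tgt m.+1.
Proof.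
elim/ltn_ind: m => m IH; case: (leqP m 4) => hm.
- have : Nfc m = nth 0 [:: 1; 4; 3; 20; 11] m.
    by rewrite -Nf_base (nth_map 0) ?size_iota ?nth_iota.
  by rewrite NfE => ->; case: m hm {IH} => [|[|[|[|[|m]]]]].
- have hb := Nf_rec (m - 5).
  have e1 : 5 + (m - 5) = m by lia.
  have e2 : 1 + (m - 5) = (m - 4) by lia.
  have e3 : 3 + (m - 5) = (m - 2) by lia.
  rewrite e1 e2 e3 (IH (m - 4)) 1?(IH (m - 2)) in hb; try lia.
  have -> : m.+1 = (m - 3).+4 by lia.
  have e4 : (m - 4).+1 = m - 3 by lia.
  have e5 : (m - 2).+1 = (m - 3).+2 by lia.
  rewrite e4 e5 /tgt in hb; rewrite /tgt.
  have := jac_rec (m - 3).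
  have ho1 : odd (m - 3).+4 = odd (m - 3) by rewrite /= !negbK.
  have ho2 : odd (m - 3).+2 = odd (m - 3) by rewrite /= !negbK.
  rewrite ho1; rewrite ho2 in hb; case: (odd (m - 3)) hb; lia.
Qed.

Lemma cardsum (T : finType) (P : pred T) : #|[set a | P a]| = \sum_a (P a : nat).
Proof. by rewrite -sum1dep_card big_mkcond /=; apply: eq_bigr => a _; case: (P a). Qed.

Lemma tuple_sum m (F : m.+1.-tuple S3 -> nat) :
  \sum_(t : m.+1.-tuple S3) F t = \sum_(z : S3) \sum_(t : m.-tuple S3) F [tuple of z :: t].
Proof.
rewrite pair_bigA /=.
rewrite (reindex (fun p : S3 * m.-tuple S3 => [tuple of p.1 :: p.2])) //=.
exists (fun t : m.+1.-tuple S3 => (thead t, [tuple of behead t])).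
- by move=> [z t] _ /=; rewrite theadE; congr pair; apply: val_inj.
- by move=> t _; rewrite [RHS]tuple_eta; apply: val_inj.
Qed.

Lemma Ncount m x y : \sum_(t : m.-tuple S3) (path R3 x t && (last x t == y)) = Wb m x y.
Proof.
elim: m x => [|m IH] x.
- rewrite (big_pred1 [tuple]) //.
  by move=> t; apply/esym/eqP; apply: tuple0.
- have -> : Wb m.+1 x y = \sum_(z : S3) R3 x z * Wb m z y by [].
  rewrite tuple_sum; apply: eq_bigr => z _.
  rewrite -IH big_distrr; apply: eq_bigr => t _ /=.
  by case: (R3 x z) => /=; rewrite ?mul1n ?mul0n.
Qed.

Lemma ffun_sum m (F : {ffun 'I_m.+1 -> S3} -> nat) :
  \sum_(f : {ffun 'I_m.+1 -> S3}) F f = \sum_(t : m.+1.-tuple S3) F [ffun i => tnth t i].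
Proof.
rewrite (reindex (fun t : m.+1.-tuple S3 => [ffun i => tnth t i])) //.
exists (fun f : {ffun 'I_m.+1 -> S3} => [tuple f i | i < m.+1]).
- by move=> t _; apply: eq_from_tnth => i; rewrite tnth_mktuple ffunE.
- by move=> f _; apply/ffunP => i; rewrite !ffunE tnth_mktuple.
Qed.

Lemma fvalid_tuple m (hk : 0 < m.+1) (x : S3) (t : m.-tuple S3) :
  (fvalid hk [ffun i : 'I_m.+1 => tnth [tuple of x :: t] i]
   && fnorm hk [ffun i : 'I_m.+1 => tnth [tuple of x :: t] i]) =
  [&& x.1.1 == o0, (last x t).2 == o2, R3 (last x t) (rot3 x) & path R3 x t].
Proof.
set f := [ffun i : 'I_m.+1 => tnth [tuple of x :: t] i].
have fE : forall i : 'I_m.+1, f i = nth x (x :: t) i by move=> i; rewrite ffunE (tnth_nth x).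
have fk : forall j, j < m.+1 -> f (ordk hk j) = nth x (x :: t) j.
  by move=> j hj; rewrite fE /= modn_small.
have hl : nth x (x :: t) m = last x t.
  by have := nth_last x (x :: t); rewrite /= size_tuple.
have hs : size t = m := size_tuple t.
have -> : fnorm hk f = (x.1.1 == o0) && ((last x t).2 == o2).
  by rewrite /fnorm fk // fk ?subn1 // hl.
have -> : fvalid hk f = path R3 x t && R3 (last x t) (rot3 x).
  apply/forallP/andP.
  - move=> h; split.
    + apply/(pathP x) => i hi.
      have hi' : i < m.+1 by rewrite hs in hi; lia.
      have := h (Ordinal hi'); rewrite /nextf /=.
      have -> : (i.+1 < m.+1) = true by rewrite hs in hi; lia.
      by rewrite fE fk //= ; rewrite hs in hi; lia.
    + have := h ord_max; rewrite /nextf /= ltnn fE fk //=.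
      by rewrite hl.
  - case=> hp hlast i; rewrite /nextf; case: ifP => hi.
    + move/(pathP x): hp => /(_ i).
      rewrite hs fE fk //= => H; apply: H; lia.
    + have hv : nat_of_ord i = m by have := ltn_ord i; lia.
      by rewrite fE fk //= hv hl.
by case: (path R3 x t); case: (R3 _ _); case: (x.1.1 == o0); case: ((last x t).2 == o2).
Qed.

Lemma count_f m (hk : 0 < m.+1) :
  #|[set f : {ffun 'I_m.+1 -> S3} | fvalid hk f && fnorm hk f]| = Nf m.
Proof.
rewrite cardsum ffun_sum tuple_sum /Nf; apply: eq_bigr => x _.
under eq_bigr => t _ do rewrite fvalid_tuple.
under [RHS]eq_bigr => y _ do rewrite -Ncount big_distrr.
rewrite exchange_big; apply: eq_bigr => t _.
rewrite (bigD1 (last x t)) //= eqxx andbT big1 ?addn0.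
- rewrite /condN.
  by case: (path R3 x t); case: (R3 _ _); case: (x.1.1 == o0); case: ((last x t).2 == o2).
- by move=> y hy; rewrite eq_sym (negbTE hy) andbF muln0.
Qed.

Theorem theorem1 (k : nat) (hk : 1 <= k) :
  #|one_factorisations (3 * k) k| =
    (if odd k then jacobsthal k else 4 * jacobsthal k).
Proof.
rewrite (card_OF hk) (card_CE hk) (card_EF hk).
case: k hk => [//|m] hk.
by rewrite count_f Nf_val.
Qed.
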